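(* The function $e(\lambda)$ is strictly increasing on $(\lambda^*,\infty)$; in fact $e'(\lambda)>0$ for all $\lambda>\lambda^*$.
   Context: Standing setup. Let $\gamma>0$; let $a_1,\dots,a_p>0$ with weights $\omega_i>0$, $\sum_i\omega_i=1$, and $b_1,\dots,b_n>0$ with weights $\pi_j>0$, $\sum_j\pi_j=1$. Let $\mu$ be the limiting spectral distribution of $\mathbf{N}\mathbf{N}^T$ where $\mathbf{N}=\mathbf{A}^{1/2}\mathbf{G}\mathbf{B}^{1/2}$ is $k\times l$, $\mathbf{G}$ has iid mean-zero entries of variance $1/l$, $k/l\to\gamma$, and the spectral distributions of $\mathbf{A},\mathbf{B}$ converge to $\nu=\sum_i\omega_i\delta_{a_i}$ and $\underline{\nu}=\sum_j\pi_j\delta_{b_j}$. $\mu$ is a compactly supported probability measure on $[0,\infty)$; $\lambda^*>0$ is the right endpoint of its support, and $s(\lambda)=\int\frac{d\mu(t)}{t-\lambda}$ for $\lambda>\lambda^*$. Define $G(e)=\sum_{j=1}^n\frac{b_j\pi_j}{1+\gamma b_j e}$ and $F(\lambda,e)=e-\sum_{i=1}^p\frac{a_i\omega_i}{a_iG(e)-\lambda}$. It is known (master equations) that there is a smooth real function $e(\lambda)$ on $(\lambda^*,\infty)$, never equal to a pole $-1/(\gamma b_j)$ of $G$ and with $a_iG(e(\lambda))\ne\lambda$, satisfying $s(\lambda)=\sum_{i=1}^p\frac{\omega_i}{a_iG(e(\lambda))-\lambda}$ and $F(\lambda,e(\lambda))=0$. *)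

(* Defs.v *)
From HB Require Import structures.
From mathcomp Require Import all_boot all_order all_algebra.
From mathcomp Require Import all_classical all_reals all_analysis.
Set Implicit Arguments. Unset Strict Implicit. Unset Printing Implicit Defensive.
Import Order.TTheory GRing.Theory Num.Theory.
Local Open Scope ring_scope.

Definition Gfun (R : realType) (n : nat) (gamma : R) (b pi : 'I_n -> R) (e : R) : R :=
  \sum_(j < n) b j * pi j / (1 + gamma * b j * e).

Definition Ffun (R : realType) (p n : nat) (gamma : R) (a omega : 'I_p -> R)
  (b pi : 'I_n -> R) (lam e : R) : R :=
  e - \sum_(i < p) a i * omega i / (a i * Gfun gamma b pi e - lam).

Definition stieltjes (R : realType) (mu : probability R R) (lam : R) : R :=
  Rintegral mu setT (fun t => (t - lam)^-1).

Definition right_endpoint_of_support (R : realType) (mu : probability R R) (lstar : R) : Prop :=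
  (mu `]lstar, +oo[%classic = 0)%E /\
  (forall eps : R, 0 < eps -> (0 < mu `]((lstar - eps)%R), +oo[%classic)%E).

(* Main.v *)
Require Import Defs.
From HB Require Import structures.
From mathcomp Require Import all_boot all_order all_algebra.
From mathcomp Require Import all_classical all_reals all_analysis.
From mathcomp Require Import measurable_realfun.
From mathcomp Require Import ring lra.
Import Order.TTheory GRing.Theory Num.Theory.
Import numFieldNormedType.Exports.
Local Open Scope ring_scope.

Local Open Scope classical_set_scope.
Lemma phi_id (R : realType) (p n : nat) (gamma : R) (a omega : 'I_p -> R) (b pi : 'I_n -> R) (x ex s : R) :
  gamma != 0 -> \sum_(i < p) omega i = 1 -> \sum_(j < n) pi j = 1 ->
  (forall j, 1 + gamma * b j * ex != 0) -> (forall i, a i * Gfun gamma b pi ex != x) ->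
  s = \sum_(i < p) omega i / (a i * Gfun gamma b pi ex - x) ->
  Ffun gamma a omega b pi x ex = 0 ->
  \sum_(j < n) pi j / (1 + gamma * b j * ex) = 1 - gamma * (1 + x * s).
Proof.
move=> g0 so sp xj di hs hF.
have He : ex = \sum_(i < p) a i * omega i / (a i * Gfun gamma b pi ex - x).
  by apply/eqP; rewrite -subr_eq0; apply/eqP.
have H1 : Gfun gamma b pi ex * ex = 1 + x * s.
  rewrite {2}He mulr_sumr hs mulr_sumr -so -big_split; apply: eq_bigr => i _ /=.
  have : a i * Gfun gamma b pi ex - x != 0 by rewrite subr_eq0.
  by move=> h; field.
have H2 : gamma * (Gfun gamma b pi ex * ex) = 1 - \sum_(j < n) pi j / (1 + gamma * b j * ex).
  rewrite /Gfun mulr_suml mulr_sumr -[X in _ = X - _]sp -sumrB; apply: eq_bigr => j _.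
  by have := xj j => h; field.
by rewrite -H1 H2; ring.
Qed.

Lemma phi_mono (R : realType) (n : nat) (gamma : R) (b pi : 'I_n -> R) (u v : R) :
  0 < gamma -> (forall j, 0 < b j) -> (forall j, 0 < pi j) -> \sum_(j < n) pi j = 1 ->
  (forall j, 0 < (1 + gamma * b j * u) * (1 + gamma * b j * v)) -> v < u ->
  \sum_(j < n) pi j / (1 + gamma * b j * u) < \sum_(j < n) pi j / (1 + gamma * b j * v).
Proof.
move=> g0 b0 p0 sp hx vu.
rewrite -subr_gt0 -sumrB.
case: n b pi b0 p0 sp hx => [|n] b pi b0 p0 sp hx.
  by move: sp; rewrite big_ord0 => /eqP; rewrite eq_sym oner_eq0.
rewrite (bigD1 ord0) //=; apply: ltr_pwDl.
  have h := hx ord0.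
  have e : pi ord0 / (1 + gamma * b ord0 * v) - pi ord0 / (1 + gamma * b ord0 * u)
     = pi ord0 * gamma * b ord0 * (u - v) / ((1 + gamma * b ord0 * u) * (1 + gamma * b ord0 * v)).
    field; apply/andP; split; apply/negP => /eqP h0; by move: h; rewrite h0 ?mul0r ?mulr0 ltxx.
  rewrite e; apply: divr_gt0 => //; rewrite !mulr_gt0 // ?subr_gt0 //.
apply: sumr_ge0 => j _.
have h := hx j.
have e : pi j / (1 + gamma * b j * v) - pi j / (1 + gamma * b j * u)
     = pi j * gamma * b j * (u - v) / ((1 + gamma * b j * u) * (1 + gamma * b j * v)).
  field; apply/andP; split; apply/negP => /eqP h0; by move: h; rewrite h0 ?mul0r ?mulr0 ltxx.
rewrite e; apply/ltW/divr_gt0 => //; rewrite !mulr_gt0 // ?subr_gt0 //.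
Qed.
Lemma meas_inv (R : realType) (l : R) : measurable_fun setT (fun t : R => (t - l)^-1).
Proof.
have -> : (setT : set R) = [set l] `|` ~` [set l].
  by rewrite setUv.
apply/measurable_funU; [by []| |split].
- apply: measurableC; exact: measurable_set1.
- exact: measurable_fun_set1.
- apply: measurable_realfun.open_continuous_measurable_fun.
    by apply: closed_openC; apply: accessible_closed_set1; apply: hausdorff_accessible; exact: Rhausdorff.
  move=> t; rewrite inE /= => tl.
  have h1 : (fun t : R => t - l) t != 0 by rewrite subr_eq0; apply/eqP.
  apply: cvgV => //; apply: cvgB; [exact: cvg_id | exact: cvg_cst].
Qed.

Lemma integ_inv (R : realType) (mu : probability R R) (lstar l : R) :
  mu (`]lstar, +oo[%classic : set R) = 0%E -> lstar < l ->
  mu.-integrable setT (EFin \o (fun t : R => (t - l)^-1)).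
Proof.
move=> hN ll.
have mN : measurable (`]lstar, +oo[%classic : set R) by [].
have mf : measurable_fun setT (fun t : R => ((t - l)^-1)%:E).
  by have /measurable_EFinP := (@meas_inv R l).
apply/(@negligible_integrable _ _ _ mu setT _ _ mN measurableT mf hN).
apply: measurable_bounded_integrable.
- exact: measurableD.
- apply: (le_lt_trans (probability_le1 _ _)); first exact: measurableD.
  exact: ltry.
- apply: measurable_funS ((@meas_inv R l)) => //.
- rewrite /bounded_near; near=> M => t [_ /=]; rewrite in_itv /= andbT => /negP; rewrite -leNgt => tl.
  apply: (@le_trans _ _ (l - lstar)^-1).
    rewrite normfV -normrN opprB ger0_norm; last by rewrite subr_ge0 (le_trans tl) // ltW.
    rewrite lef_pV2 ?posrE ?subr_gt0 //; [lra | exact: le_lt_trans ll].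
  near: M; apply: nbhs_pinfty_ge; exact: num_real.
Unshelve. all: by end_near.
Qed.

Lemma integ_scaled (R : realType) (mu : probability R R) (lstar l k : R) :
  mu (`]lstar, +oo[%classic : set R) = 0%E -> lstar < l ->
  mu.-integrable setT (EFin \o (fun t : R => k * (t - l)^-1)).
Proof.
move=> hN ll.
have := integrableZl measurableT k (@integ_inv R mu lstar l hN ll).
by apply: eq_integrable => // t _ /=; rewrite EFinM.
Qed.

Lemma hmono (R : realType) (mu : probability R R) (lstar x y : R) :
  mu (`]-oo, 0[%classic : set R) = 0%E ->
  mu (`]lstar, +oo[%classic : set R) = 0%E -> 0 < lstar -> lstar < x -> x < y ->
  x * stieltjes mu x <= y * stieltjes mu y.
Proof.
move=> h0 hN l0 lx xy.
have ly : lstar < y by apply: lt_trans xy.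
rewrite /stieltjes -!RintegralZl //; try exact: (@integ_inv R mu lstar).
set N1 := (`]-oo, 0[%classic : set R).
set N2 := (`]lstar, +oo[%classic : set R).
have mN1 : measurable N1 by rewrite /N1.
have mN2 : measurable N2 by rewrite /N2.
have ix := @integ_scaled R mu lstar x x hN lx.
have iy := @integ_scaled R mu lstar y y hN ly.
have mD1 : measurable (setT `\` N1) by apply: measurableD.
have mD : measurable (setT `\` N1 `\` N2) by apply: measurableD.
rewrite /Rintegral (negligible_integral mN1 measurableT ix h0).
rewrite (negligible_integral mN1 measurableT iy h0).
have ix1 : mu.-integrable (setT `\` N1) (EFin \o (fun t : R => x * (t - x)^-1)).
  by apply: integrableS ix.
have iy1 : mu.-integrable (setT `\` N1) (EFin \o (fun t : R => y * (t - y)^-1)).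
  by apply: integrableS iy.
rewrite (negligible_integral mN2 mD1 ix1 hN).
rewrite (negligible_integral mN2 mD1 iy1 hN).
apply: (@le_Rintegral _ _ _ mu (setT `\` N1 `\` N2) (fun t => x * (t - x)^-1) (fun t => y * (t - y)^-1) mD).
- by apply: integrableS ix.
- by apply: integrableS iy.
move=> t [[_ /=]]; rewrite /N1 /N2 /= !in_itv /= andbT => /negP t0 /negP tl.
rewrite -leNgt in t0; rewrite -leNgt in tl.
have hx : 0 < x - t by rewrite subr_gt0 (le_lt_trans tl).
have hy : 0 < y - t by rewrite subr_gt0 (le_lt_trans tl ly).
have ex : x * (t - x)^-1 = -1 - t / (x - t).
  have : t - x != 0 by rewrite subr_eq0 lt_eqF // (le_lt_trans tl lx).
  have : x - t != 0 by rewrite gt_eqF.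
  by move=> h1 h2; field; rewrite h1 h2.
have ey : y * (t - y)^-1 = -1 - t / (y - t).
  have : t - y != 0 by rewrite subr_eq0 lt_eqF // (le_lt_trans tl ly).
  have : y - t != 0 by rewrite gt_eqF.
  by move=> h1 h2; field; rewrite h1 h2.
rewrite ex ey lerD2l lerN2.
apply: ler_wpM2l => //.
rewrite lef_pV2 ?posrE //; lra.
Qed.
Local Close Scope classical_set_scope.
Section D.
Variable R : realType.
Variable x : R.
Lemma isdM (f g : R -> R) (df dg : R) : is_derive x 1 f df -> is_derive x 1 g dg ->
  is_derive x 1 (fun t => f t * g t) (f x * dg + g x * df).
Proof. move=> hf hg; exact: (is_deriveM hf hg). Qed.
Lemma isdD (f g : R -> R) (df dg : R) : is_derive x 1 f df -> is_derive x 1 g dg ->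
  is_derive x 1 (fun t => f t + g t) (df + dg).
Proof. move=> hf hg; exact: (is_deriveD hf hg). Qed.
Lemma isdB (f g : R -> R) (df dg : R) : is_derive x 1 f df -> is_derive x 1 g dg ->
  is_derive x 1 (fun t => f t - g t) (df - dg).
Proof. move=> hf hg; exact: (is_deriveB hf hg). Qed.
Lemma isdC (c0 : R) : is_derive x 1 (fun t : R => c0) 0.
Proof. exact: is_derive_cst. Qed.
Lemma isdid : is_derive x 1 (fun t : R => t) 1.
Proof. exact: is_derive_id. Qed.
Lemma isdS n (h : 'I_n -> R -> R) (dh : 'I_n -> R) : (forall i, is_derive x 1 (h i) (dh i)) ->
  is_derive x 1 (fun t => \sum_(i < n) h i t) (\sum_(i < n) dh i).
Proof.
move=> H; have := is_derive_sum H.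
by have -> : (\sum_(i < n) h i) = (fun t => \sum_(i < n) h i t) by apply/funext => t; rewrite fct_sumE.
Qed.
Lemma isdV (f : R -> R) (df : R) : f x != 0 -> is_derive x 1 f df ->
  is_derive x 1 (fun t => (f t)^-1) (- (f x)^-2 * df).
Proof. move=> h hf; exact: (is_deriveV h hf). Qed.
End D.
Arguments isdM {R x f g df dg}.
Arguments isdD {R x f g df dg}.
Arguments isdB {R x f g df dg}.
Arguments isdC {R x}.
Arguments isdid {R x}.
Arguments isdS {R x n h dh}.
Arguments isdV {R x f df}.

Lemma dnz (R : realType) (p n : nat) (gamma : R) (a omega : 'I_p -> R) (b pi : 'I_n -> R)
  (e : R -> R) (lstar x0 : R) :
  (forall i, 0 < a i) -> (forall i, 0 < omega i) -> \sum_(i < p) omega i = 1 ->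
  lstar < x0 -> derivable e x0 1 ->
  (forall x, lstar < x -> forall j, 1 + gamma * b j * e x != 0) ->
  (forall x, lstar < x -> forall i, a i * Gfun gamma b pi (e x) != x) ->
  (forall x, lstar < x -> Ffun gamma a omega b pi x (e x) = 0) ->
  derive1 e x0 != 0.
Proof.
move=> ha ho so lx de hpole hd hF.
apply/eqP => e0.
have he : is_derive x0 1 e 0 by rewrite -e0 derive1E; apply: derivableP.
pose psi t := \sum_(i < p) a i * omega i / (a i * Gfun gamma b pi (e t) - t).
have hnear : \forall t \near x0, e t = psi t.
  have : \forall t \near x0, t \in `]lstar, +oo[ by apply: near_in_itvoy; rewrite in_itv /= andbT.
  apply: filterS => t; rewrite in_itv /= andbT => lt.
  by apply/eqP; rewrite -subr_eq0; apply/eqP; exact: hF.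
have hx j : is_derive x0 1 (fun t => 1 + gamma * b j * e t) 0.
  by apply: is_derive_eq (isdD (isdC 1) (isdM (isdC (gamma * b j)) he)) _; rewrite /=; ring.
have hg j : is_derive x0 1 (fun t => b j * pi j / (1 + gamma * b j * e t)) 0.
  apply: is_derive_eq (isdM (isdC (b j * pi j)) (isdV (f := fun t => 1 + gamma * b j * e t) (hpole _ lx j) (hx j))) _.
  by rewrite /=; ring.
have hG : is_derive x0 1 (fun t => Gfun gamma b pi (e t)) 0.
  apply: is_derive_eq (isdS (h := fun j t => b j * pi j / (1 + gamma * b j * e t)) hg) _.
  by rewrite big1.
have hdi i : a i * Gfun gamma b pi (e x0) - x0 != 0 by rewrite subr_eq0 hd.
have hdd i : is_derive x0 1 (fun t => a i * Gfun gamma b pi (e t) - t) (-1).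
  by apply: is_derive_eq (isdB (isdM (isdC (a i)) hG) isdid) _; rewrite /=; ring.
have hi i : is_derive x0 1 (fun t => a i * omega i / (a i * Gfun gamma b pi (e t) - t))
    (a i * omega i / (a i * Gfun gamma b pi (e x0) - x0) ^+ 2).
  apply: is_derive_eq (isdM (isdC (a i * omega i)) (isdV (f := fun t => a i * Gfun gamma b pi (e t) - t) (hdi i) (hdd i))) _.
  by rewrite /=; field.
have hpsi := isdS (h := fun i t => a i * omega i / (a i * Gfun gamma b pi (e t) - t)) hi.
have h2 : is_derive x0 1 psi 0 by apply: near_eq_is_derive hnear he.
have : \sum_(i < p) a i * omega i / (a i * Gfun gamma b pi (e x0) - x0) ^+ 2 = 0.
  have E1 : 'D_1 psi x0 = \sum_(i < p) a i * omega i / (a i * Gfun gamma b pi (e x0) - x0) ^+ 2.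
    by case: hpsi.
  have E2 : 'D_1 psi x0 = 0 by case: h2.
  by rewrite -E1 E2.
apply/eqP; rewrite gt_eqF //.
case: p a omega ha ho so hd hdi {hF h2 psi hnear hpsi hi hdd} => [|p] a omega ha ho so hd hdi.
  by move: so; rewrite big_ord0 => /eqP; rewrite eq_sym oner_eq0.
rewrite (bigD1 ord0) //=; apply: ltr_pwDl.
  by apply: divr_gt0; [rewrite mulr_gt0 | rewrite exprn_even_gt0 //= hdi].
apply: sumr_ge0 => i _; apply/ltW/divr_gt0; [rewrite mulr_gt0 // | rewrite exprn_even_gt0 //= hdi].
Qed.

Local Open Scope classical_set_scope.
Theorem proposition3p7 (R : realType) (gamma : R) (p n : nat)
  (a omega : 'I_p -> R) (b pi : 'I_n -> R)
  (mu : probability R R) (lstar : R) (e : R -> R) :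
  0 < gamma ->
  (forall i, 0 < a i) -> (forall i, 0 < omega i) -> \sum_(i < p) omega i = 1 ->
  (forall j, 0 < b j) -> (forall j, 0 < pi j) -> \sum_(j < n) pi j = 1 ->
  (* mu is a compactly supported probability measure on [0, +oo) *)
  mu (`]-oo, 0[%classic : set R) = 0%E ->
  (exists M : R, mu (`]M, +oo[%classic : set R) = 0%E) ->
  right_endpoint_of_support mu lstar -> 0 < lstar ->
  (* e is smooth on (lstar, +oo) *)
  (forall (k : nat) (x : R), lstar < x -> derivable (derive1n k e) x 1) ->
  (* e(lambda) never hits a pole of G, and a_i G(e(lambda)) <> lambda *)
  (forall x, lstar < x -> forall j, 1 + gamma * b j * e x != 0) ->
  (forall x, lstar < x -> forall i, a i * Gfun gamma b pi (e x) != x) ->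
  (* master equations *)
  (forall x, lstar < x ->
     stieltjes mu x = \sum_(i < p) omega i / (a i * Gfun gamma b pi (e x) - x)) ->
  (forall x, lstar < x -> Ffun gamma a omega b pi x (e x) = 0) ->
  (forall x y, lstar < x -> x < y -> e x < e y) /\
  (forall x, lstar < x -> 0 < derive1 e x).
Proof.
move=> g0 ha ho so hb hp sp h0 _ [hN _] l0 hsm hpole hd hs hF.
have de x : lstar < x -> derivable e x 1 := hsm 0%N x.
have ce x : lstar < x -> {for x, continuous e}.
  by move=> h; apply/differentiable_continuous/derivable1_diffP/de.
have Phi x : lstar < x -> \sum_(j < n) pi j / (1 + gamma * b j * e x) = 1 - gamma * (1 + x * stieltjes mu x).
  by move=> h; apply: phi_id; [rewrite gt_eqF | | | exact: hpole | exact: hd | exact: hs | exact: hF].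
have ndec x y : lstar < x -> x < y -> e x <= e y.
  move=> lx xy; rewrite leNgt; apply/negP => yx.
  have ly := lt_trans lx xy.
  have side j : 0 < (1 + gamma * b j * e x) * (1 + gamma * b j * e y).
    pose c := fun t => 1 + gamma * b j * e t.
    have cc : {within `[x, y], continuous c}.
      apply: continuous_in_subspaceT => t; rewrite inE /= in_itv /= => /andP [xt ty].
      have lt : lstar < t := lt_le_trans lx xt.
      apply: cvgD; [exact: cvg_cst | apply: cvgM; [exact: cvg_cst | exact: ce]].
    have cx : c x != 0 by exact: hpole.
    have cy : c y != 0 by exact: hpole.
    rewrite -/(c x) -/(c y).
    case: (ltP 0 (c x * c y)) => // hle; exfalso.
    have H : Num.min (c x) (c y) <= 0 <= Num.max (c x) (c y).
      case: (ltP (c x) 0) => hcx.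
        have hcy : 0 <= c y by nra.
        rewrite ge_min le_max; apply/andP; split; apply/orP; [left; exact: ltW hcx | right; exact: hcy].
      have hcy : c y <= 0 by nra.
      rewrite ge_min le_max; apply/andP; split; apply/orP; [right; exact: hcy | left; exact: hcx].
    have [z zin cz] := IVT (ltW xy) cc H.
    move: zin; rewrite in_itv /= => /andP [xz _].
    by move: (hpole z (lt_le_trans lx xz) j); rewrite -/(c z) cz eqxx.
  have := @phi_mono R n gamma b pi (e x) (e y) g0 hb hp sp side yx.
  rewrite Phi // Phi //.
  have := @hmono R mu lstar x y h0 hN l0 lx xy.
  move=> hm; apply/negP; rewrite -leNgt.
  have := ler_wpM2l (ltW g0) hm; lra.
have nz x : lstar < x -> derive1 e x != 0.
  by move=> h; apply: (@dnz R p n gamma a omega b pi e lstar x ha ho so h (de x h) hpole hd hF).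
have sinc x y : lstar < x -> x < y -> e x < e y.
  move=> lx xy; rewrite lt_neqAle ndec // andbT; apply/eqP => exy.
  have cw : {within `[x, y], continuous e}.
    apply: derivable_within_continuous => t; rewrite in_itv /= => /andP [xt _].
    exact: de (lt_le_trans lx xt).
  have dR : forall t, t \in `]x, y[%R -> derivable e t 1.
    by move=> t; rewrite in_itv /= => /andP [xt _]; exact: de (lt_trans lx xt).
  have [c cin dc0] := Rolle xy dR cw exy.
  move: cin; rewrite in_itv /= => /andP [xc _].
  have := nz c (lt_trans lx xc); rewrite derive1E.
  by case: dc0 => _ ->; rewrite eqxx.
split => //.
move=> x lx; rewrite lt_neqAle eq_sym nz //=.
apply: (@incr_derive1_ge0_itvy _ _ false lstar).
- move=> t; rewrite inE /= in_itv /= andbT; exact: de.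
- by move=> u v; rewrite !in_itv /= !andbT => hu hv uv; exact: sinc.
- by rewrite in_itv /= andbT.
Qed.
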